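(* Let $k\ge 0$ be an integer and let $T$ be a regular tournament of order $2k+1$ (every vertex has in-degree and out-degree equal to $k$). Then $\Delta(T)=k$. Furthermore, for any ordering $\sigma$ of $V(T)$, if $u$ and $v$ denote respectively the first and the last vertex of $\sigma$, then $d_\sigma(u)=d_\sigma(v)=k$.
   Context: A tournament is a digraph with exactly one arc between each pair of distinct vertices. An ordering $\sigma=\langle v_1,\dots,v_n\rangle$ of $V(T)$ is a linear order of the vertices; an arc $(v_i,v_j)$ is backward in $\sigma$ if $j<i$ and forward otherwise. For a vertex $v$, $d_\sigma(v)$ is the number of backward arcs of $\sigma$ incident to $v$ (as head or tail). $\Delta_\sigma(T)=\max_{v\in V(T)} d_\sigma(v)$, and the degreewidth of $T$ is $\Delta(T)=\min_\sigma \Delta_\sigma(T)$, the minimum over all orderings $\sigma$ of $V(T)$. *)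

(* Defs.v *)
From mathcomp Require Import all_boot.
Set Implicit Arguments. Unset Strict Implicit. Unset Printing Implicit Defensive.

Definition is_tournament (V : finType) (arc : rel V) : Prop :=
  (forall x, ~~ arc x x) /\
  (forall x y, x != y -> arc x y (+) arc y x).

Definition outdeg (V : finType) (arc : rel V) (v : V) : nat := #|[set w | arc v w]|.
Definition indeg (V : finType) (arc : rel V) (v : V) : nat := #|[set w | arc w v]|.

Definition regular_tournament (V : finType) (arc : rel V) (k : nat) : Prop :=
  is_tournament arc /\ forall v, outdeg arc v = k /\ indeg arc v = k.

(* An ordering sigma of V is a bijection from V to positions 'I_#|V|:
   pos v is the (0-based) position of v in sigma. *)
Definition is_ordering (V : finType) (pos : {ffun V -> 'I_#|V|}) : bool :=
  injectiveb pos.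

Definition backward (V : finType) (arc : rel V) (pos : {ffun V -> 'I_#|V|}) (x y : V) : bool :=
  arc x y && (pos y < pos x).

Definition dsigma (V : finType) (arc : rel V) (pos : {ffun V -> 'I_#|V|}) (v : V) : nat :=
  #|[set w | backward arc pos v w || backward arc pos w v]|.

Definition Deltasigma (V : finType) (arc : rel V) (pos : {ffun V -> 'I_#|V|}) : nat :=
  \max_(v : V) dsigma arc pos v.

(* degreewidth: minimum over all orderings of Delta_sigma
   (every Delta_sigma is <= #|V|, so #|V| is a neutral initial value) *)
Definition degreewidth (V : finType) (arc : rel V) : nat :=
  \big[minn/#|V|]_(pos : {ffun V -> 'I_#|V|} | is_ordering pos) Deltasigma arc pos.

(* Main.v *)
Require Import Defs.
From mathcomp Require Import all_boot.
From mathcomp Require Import zify.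

Lemma bigmin_le (I : finType) (P : pred I) (F : I -> nat) x i :
  P i -> \big[minn/x]_(j | P j) F j <= F i.
Proof.
move=> Pi; rewrite -big_filter.
have : i \in filter P (index_enum I) by rewrite mem_filter Pi mem_index_enum.
elim: (filter P _) => //= a s IH; rewrite big_cons inE => /orP [/eqP<-|/IH h].
  exact: geq_minl.
exact: leq_trans (geq_minr _ _) h.
Qed.

Section Aux.
Set Implicit Arguments.
Variables (V : finType) (arc : rel V).

Definition g (pos : {ffun V -> 'I_#|V|}) x y : nat := backward arc pos x y.
Definition nback (pos : {ffun V -> 'I_#|V|}) := \sum_x \sum_y g pos x y.

Lemma gvv pos v : g pos v v = 0.
Proof. by rewrite /g /backward ltnn andbF. Qed.

Lemma nback_split pos v : nback pos =
  \sum_(x | x != v) \sum_(y | y != v) g pos x y + \sum_y (g pos v y + g pos y v).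
Proof.
have h1 : forall x, \sum_y g pos x y = g pos x v + \sum_(y | y != v) g pos x y.
  by move=> x; rewrite (bigD1 v).
rewrite /nback (eq_bigr _ (fun x _ => h1 x)) (bigD1 v) //= gvv.
rewrite big_split /= big_split /=.
have h2 : \sum_y g pos y v = \sum_(y | y != v) g pos y v.
  by rewrite (bigD1 v) //= gvv.
have h3 : \sum_y g pos v y = \sum_(y | y != v) g pos v y.
  by rewrite (bigD1 v) //= gvv.
rewrite h2 h3; lia.
Qed.

Lemma dsigma_sum pos v : dsigma arc pos v = \sum_y (g pos v y + g pos y v).
Proof.
rewrite /dsigma cardsE -sum1_card big_mkcond /=.
apply: eq_bigr => y _; rewrite unfold_in /g /backward /=.
case: (arc v y); case: (arc y v); case: ltngtP => //=.
Qed.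

Lemma first_vertex (pos : {ffun V -> 'I_#|V|}) u :
  is_tournament arc -> is_ordering pos -> val (pos u) = 0 ->
  dsigma arc pos u = indeg arc u.
Proof.
move=> [irr _] /injectiveP inj pu.
rewrite /dsigma /indeg; apply: eq_card => w; rewrite !inE /backward pu.
rewrite ltn0 andbF /=.
case: (boolP (arc w u)) => //= awu.
have : w != u by apply/eqP => e; move: awu; rewrite e (negbTE (irr u)).
move=> /eqP nwu; rewrite lt0n; apply/eqP => h.
apply: nwu; apply: inj; apply: val_inj; by rewrite /= h pu.
Qed.

Lemma last_vertex (pos : {ffun V -> 'I_#|V|}) u :
  is_tournament arc -> is_ordering pos -> val (pos u) = #|V|.-1 ->
  dsigma arc pos u = outdeg arc u.
Proof.
move=> [irr _] /injectiveP inj pu.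
rewrite /dsigma /outdeg; apply: eq_card => w; rewrite !inE /backward pu.
have lt := ltn_ord (pos w).
have -> : (#|V|.-1 < pos w) = false by apply/negbTE; rewrite -leqNgt; lia.
rewrite andbF orbF.
case: (boolP (arc u w)) => //= auw.
have : w != u by apply/eqP => e; move: auw; rewrite e (negbTE (irr u)).
move=> /eqP nwu.
have : (pos w : nat) != #|V|.-1.
  apply/eqP => h; apply: nwu; apply: inj; apply: val_inj; by rewrite /= h pu.
move=> h; rewrite ltn_neqAle h /= -ltnS prednK //.
exact: leq_ltn_trans (leq0n _) lt.
Qed.

Definition shiftf (pos : {ffun V -> 'I_#|V|}) v (w : V) : nat :=
  if w == v then 0 else if pos w < pos v then (pos w).+1 else pos w.

Lemma shiftf_lt pos v w : shiftf pos v w < #|V|.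
Proof.
rewrite /shiftf; have := ltn_ord (pos w); have := ltn_ord (pos v).
move=> hv hw; case: eqP => _; first lia; case: (ltnP (pos w) (pos v)) => h; lia.
Qed.

Definition shiftpos pos v : {ffun V -> 'I_#|V|} :=
  [ffun w => Ordinal (shiftf_lt pos v w)].

Lemma shiftpos_ord pos v : is_ordering pos -> is_ordering (shiftpos pos v).
Proof.
move=> /injectiveP inj; apply/injectiveP => x y.
rewrite !ffunE => /(congr1 val) /=; rewrite /shiftf => e.
suff h : (pos x : nat) = pos y by apply: inj; apply: val_inj.
have nv : forall z, z != v -> (pos z : nat) != pos v.
  move=> z; apply: contra => /eqP h; apply/eqP; apply: inj; exact: val_inj.
have nx := nv x; have ny := nv y.
have ex : x = v -> (pos x : nat) = pos v by move->.
have ey : y = v -> (pos y : nat) = pos v by move->.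
move: e nx ny ex ey.
case: (x =P v) => hx; case: (y =P v) => hy /=;
move: (nat_of_ord (pos x)) (nat_of_ord (pos y)) (nat_of_ord (pos v)) => a b c;
move=> e nx ny ex ey.
- by rewrite ex // ey.
- have {}ex := ex hx; have {}ny := ny isT.
  move: e; case: (ltnP b c) => ? ?; lia.
- have {}ey := ey hy; have {}nx := nx isT.
  move: e; case: (ltnP a c) => ? ?; lia.
- have {}nx := nx isT; have {}ny := ny isT.
  move: e; case: (ltnP a c); case: (ltnP b c) => ? ? ?; lia.
Qed.

Lemma shiftpos_v pos v : val (shiftpos pos v v) = 0.
Proof. by rewrite ffunE /= /shiftf eqxx. Qed.

Lemma shiftpos_rest pos v x y : is_ordering pos -> x != v -> y != v ->
  g (shiftpos pos v) x y = g pos x y.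
Proof.
move=> /injectiveP inj xv yv.
have nv : forall z, z != v -> (pos z : nat) != pos v.
  move=> z; apply: contra => /eqP h; apply/eqP; apply: inj; exact: val_inj.
have nx := nv x xv; have ny := nv y yv.
rewrite /g /backward !ffunE /= /shiftf (negbTE xv) (negbTE yv).
suff -> : ((if pos y < pos v then (pos y).+1 else pos y) <
          (if pos x < pos v then (pos x).+1 else pos x)) = (pos y < pos x) by [].
move: nx ny; move: (nat_of_ord (pos x)) (nat_of_ord (pos y)) (nat_of_ord (pos v)) => a b c.
move=> nx ny; case: (ltnP a c); case: (ltnP b c) => ? ?; apply/idP/idP => ?; lia.
Qed.

Lemma nback_shift pos v : is_ordering pos ->
  nback (shiftpos pos v) = nback pos - dsigma arc pos v + dsigma arc (shiftpos pos v) v.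
Proof.
move=> op; rewrite !dsigma_sum (nback_split (shiftpos pos v) v) (nback_split pos v).
rewrite (eq_bigr (fun x => \sum_(y | y != v) g pos x y)); last first.
  move=> x xv; apply: eq_bigr => y yv; exact: shiftpos_rest.
lia.
Qed.

End Aux.

Theorem mainTheorem1 (V : finType) (arc : rel V) (k : nat) :
  #|V| = 2 * k + 1 ->
  regular_tournament arc k ->
  degreewidth arc = k /\
  (forall (pos : {ffun V -> 'I_#|V|}), is_ordering pos ->
     forall u v : V, val (pos u) = 0 -> val (pos v) = #|V|.-1 ->
       dsigma arc pos u = k /\ dsigma arc pos v = k).
Proof.
move=> card [tour reg].
have dfirst : forall pos u, is_ordering pos -> val (pos u) = 0 -> dsigma arc pos u = k.
  by move=> pos u op pu; rewrite first_vertex // (reg u).2.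
have dlast : forall pos u, is_ordering pos -> val (pos u) = #|V|.-1 -> dsigma arc pos u = k.
  by move=> pos u op pu; rewrite last_vertex // (reg u).1.
split; last first.
  by move=> pos op u v pu pv; split; [apply: dfirst | apply: dlast].
have n0 : 0 < #|V| by rewrite card addn1.
have lower : forall pos, is_ordering pos -> k <= Deltasigma arc pos.
  move=> pos op.
  have : (Ordinal n0) \in codom pos.
    by apply: inj_card_onto; [exact/injectiveP | rewrite card_ord].
  case/codomP => u hu.
  rewrite -(dfirst pos u op); last by rewrite -hu.
  exact: leq_bigmax.
pose pos0 : {ffun V -> 'I_#|V|} := [ffun v => enum_rank v].
have op0 : is_ordering pos0.
  by apply/injectiveP => x y; rewrite !ffunE; exact: enum_rank_inj.
case: (arg_minnP (nback arc) op0) => pm opm minm.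
have upper : Deltasigma arc pm <= k.
  apply/bigmax_leqP => v _.
  have ops := shiftpos_ord pm v opm.
  have := minm _ ops.
  rewrite nback_shift // (dfirst _ v ops (shiftpos_v pm v)).
  have hs := nback_split arc pm v; rewrite -dsigma_sum in hs.
  lia.
apply/eqP; rewrite eqn_leq; apply/andP; split.
  rewrite /degreewidth; apply: leq_trans upper; exact: bigmin_le.
rewrite /degreewidth; apply: (big_ind (fun m => k <= m)).
- lia.
- by move=> a b ha hb; rewrite leq_min ha hb.
- exact: lower.
Qed.
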